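(* Let $d\ge1$, let $\nu:\mathbb J\to\mathbb N_+$ be monotonically increasing and $p:\mathbb J\to(0,1)$ strictly decreasing with $\sum_{j\in\mathbb J}p_j=1$. Let $(j^{(t)})_{t\ge1}$ be an efficiency-nonincreasing enumeration of $\mathbb J$ and $I_{(t)}:=\{j^{(1)},\dots,j^{(t)}\}$. Then for every $t\ge1$, $I_{(t)}$ is a solution of Problem 3 with $P=p(I_{(t)})$.
   Context: $\mathbb J:=\mathbb N^d$ with $\mathbb N=\{0,1,2,\dots\}$, partially ordered componentwise ($i\le j$ iff $i_h\le j_h$ for all $h$; $i<j$ iff $i\le j$, $i\neq j$). For $I\subseteq\mathbb J$, $\operatorname{\downarrow} I:=\{j: j\le i\text{ for some } i\in I\}$. $\nu(I):=\sum_{j\in I}\nu_j$, $p(I):=\sum_{j\in I}p_j$, efficiency $r_j:=p_j/\nu_j$. Strictly decreasing: $i<j\Rightarrow f_i>f_j$; monotonically increasing: $i<j\Rightarrow f_i\le f_j$. An efficiency-nonincreasing enumeration of $\mathbb J$ is a bijection $t\mapsto j^{(t)}$ from $\mathbb N_+$ onto $\mathbb J$ with $r_{j^{(t)}}\ge r_{j^{(t+1)}}$ for all $t$. Problem 3 (for given $P\in(0,1)$): minimize $\nu(I)$ over $I\subseteq\mathbb J$ subject to $I=\operatorname{\downarrow} I$ and $p(I)\ge P$. *)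

(* Defs.v *)
From Stdlib Require Import Reals List Arith.
From Stdlib Require Fin.
Import ListNotations.
Open Scope R_scope.

(* The index set J = N^d, as functions Fin.t d -> nat. *)
Definition idx (d : nat) : Type := Fin.t d -> nat.

Definition leJ {d} (i j : idx d) : Prop := forall h, (i h <= j h)%nat.
Definition ltJ {d} (i j : idx d) : Prop := leJ i j /\ i <> j.

Definition downclosed {d} (I : idx d -> Prop) : Prop :=
  forall j, I j <-> exists i, I i /\ leJ j i.

Definition sumR {d} (f : idx d -> R) (l : list (idx d)) : R :=
  fold_right (fun j acc => f j + acc) 0 l.
Definition sumN {d} (f : idx d -> nat) (l : list (idx d)) : nat :=
  fold_right (fun j acc => (f j + acc)%nat) 0%nat l.

Definition finsub {d} (I : idx d -> Prop) (l : list (idx d)) : Prop :=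
  NoDup l /\ forall j, In j l -> I j.

(* nu(I) <= M, for nu(I) in N u {oo} (sum of nonnegative terms = sup of finite partial sums) *)
Definition nu_le {d} (nu : idx d -> nat) (I : idx d -> Prop) (M : nat) : Prop :=
  forall l, finsub I l -> (sumN nu l <= M)%nat.

(* p(I) >= P, where p(I) = sup of finite partial sums of the nonnegative p *)
Definition p_ge {d} (p : idx d -> R) (I : idx d -> Prop) (P : R) : Prop :=
  forall eps, 0 < eps -> exists l, finsub I l /\ sumR p l > P - eps.

Definition sums_to_one {d} (p : idx d -> R) : Prop :=
  (forall l, NoDup l -> sumR p l <= 1) /\ p_ge p (fun _ => True) 1.

Definition eff {d} (nu : idx d -> nat) (p : idx d -> R) (j : idx d) : R :=
  p j / INR (nu j).

Definition eff_enum {d} (nu : idx d -> nat) (p : idx d -> R) (e : nat -> idx d) : Prop :=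
  (forall s t, (1 <= s)%nat -> (1 <= t)%nat -> e s = e t -> s = t) /\
  (forall j, exists t, (1 <= t)%nat /\ e t = j) /\
  (forall t, (1 <= t)%nat -> eff nu p (e t) >= eff nu p (e (S t))).

Definition prefix_list {d} (e : nat -> idx d) (t : nat) : list (idx d) := map e (seq 1 t).
Definition prefix_set {d} (e : nat -> idx d) (t : nat) : idx d -> Prop :=
  fun j => exists s, (1 <= s <= t)%nat /\ e s = j.

Definition feasible3 {d} (p : idx d -> R) (P : R) (I : idx d -> Prop) : Prop :=
  downclosed I /\ p_ge p I P.
Definition solves_problem3 {d} (nu : idx d -> nat) (p : idx d -> R) (P : R)
    (I : idx d -> Prop) : Prop :=
  feasible3 p P I /\
  forall I', feasible3 p P I' -> forall M, nu_le nu I' M -> nu_le nu I M.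

(* Main.v *)
Require Import Defs.
From Stdlib Require Import Reals List Arith Lra Lia Classical.
Import ListNotations.
Open Scope R_scope.

Lemma sumR_lin {d} (p : idx d -> R) (nu : idx d -> nat) (c : R) l :
  sumR (fun j => p j - c * INR (nu j)) l = sumR p l - c * INR (sumN nu l).
Proof.
  induction l as [|a l IH]; simpl. lra.
  rewrite IH, plus_INR. ring.
Qed.

Lemma sumR_INR {d} (nu : idx d -> nat) l :
  sumR (fun j => INR (nu j)) l = INR (sumN nu l).
Proof.
  induction l as [|a l IH]; simpl. reflexivity.
  rewrite IH, plus_INR. ring.
Qed.

Lemma keyB {d} (w : idx d -> R) : forall l L, NoDup l ->
  (forall y, In y L -> 0 <= w y) ->
  (forall y, In y l -> ~ In y L -> w y <= 0) ->
  sumR w l <= sumR w L.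
Proof.
  induction l as [|a l IH]; intros L Hnd HL Hl; simpl.
  - clear Hl. induction L as [|b L IHL]; simpl. lra.
    assert (0 <= w b) by (apply HL; simpl; auto).
    assert (0 <= sumR w L) by (apply IHL; intros; apply HL; simpl; auto). lra.
  - inversion Hnd as [|? ? Hna Hnd']; subst.
    destruct (classic (In a L)) as [Ha|Ha].
    + destruct (in_split _ _ Ha) as [L1 [L2 ->]].
      assert (E : sumR w (L1 ++ a :: L2) = w a + sumR w (L1 ++ L2)).
      { clear. induction L1; simpl. reflexivity. rewrite IHL1. ring. }
      rewrite E.
      assert (sumR w l <= sumR w (L1 ++ L2)).
      { apply IH; auto.
        - intros y Hy. apply HL. apply in_app_or in Hy. apply in_or_app.
          simpl. tauto.
        - intros y Hy Hy2. apply Hl. simpl; auto.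
          intro H. apply in_app_or in H. simpl in H.
          destruct H as [H|[H|H]]; [|subst; contradiction|];
          apply Hy2, in_or_app; auto. }
      lra.
    + assert (w a <= 0) by (apply Hl; simpl; auto).
      assert (sumR w l <= sumR w L).
      { apply IH; auto. intros y Hy Hy2. apply Hl; simpl; auto. }
      lra.
Qed.

Lemma div_gt (a b x y : R) : 0 < b -> b < a -> 0 < x -> x <= y -> a / x > b / y.
Proof.
  intros Hb Hab Hx Hxy. unfold Rdiv.
  assert (/ y <= / x) by (apply Rinv_le_contravar; lra).
  assert (0 < / y) by (apply Rinv_0_lt_compat; lra).
  nra.
Qed.

Theorem corollary1 (d : nat) (hd : (1 <= d)%nat)
  (nu : idx d -> nat) (p : idx d -> R) (e : nat -> idx d)
  (hnu_pos : forall j, (0 < nu j)%nat)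
  (hnu_mono : forall i j, ltJ i j -> (nu i <= nu j)%nat)
  (hp_range : forall j, 0 < p j < 1)
  (hp_dec : forall i j, ltJ i j -> p i > p j)
  (hp_sum : sums_to_one p)
  (he : eff_enum nu p e) :
  forall t, (1 <= t)%nat ->
    solves_problem3 nu p (sumR p (prefix_list e t)) (prefix_set e t).
Proof.
  intros t Ht.
  destruct he as [Hinj [Hsurj Hmon]].
  assert (Hchain : forall s k, (1 <= s)%nat -> eff nu p (e s) >= eff nu p (e (s + k)%nat)).
  { intros s k Hs. induction k. rewrite Nat.add_0_r. lra.
    replace (s + S k)%nat with (S (s + k)) by lia.
    specialize (Hmon (s + k)%nat ltac:(lia)). lra. }
  assert (Hle : forall s s', (1 <= s)%nat -> (s <= s')%nat -> eff nu p (e s) >= eff nu p (e s')).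
  { intros s s' Hs Hss. replace s' with (s + (s' - s))%nat by lia. auto. }
  assert (Hnupos : forall j, 0 < INR (nu j)) by (intro j; apply lt_0_INR, hnu_pos).
  set (L := prefix_list e t).
  assert (HinL : forall y, In y L <-> prefix_set e t y).
  { intro y. unfold L, prefix_list, prefix_set. rewrite in_map_iff.
    split; intros [s [H1 H2]]; exists s; rewrite in_seq in *; split; auto; lia. }
  assert (HndL : NoDup L).
  { unfold L, prefix_list. apply NoDup_map_NoDup_ForallPairs.
    - intros a b Ha Hb. rewrite in_seq in Ha, Hb. apply Hinj; lia.
    - apply seq_NoDup. }
  set (rs := eff nu p (e t)).
  assert (Hrs : 0 < rs).
  { unfold rs, eff, Rdiv. apply Rmult_lt_0_compat. apply hp_range.
    apply Rinv_0_lt_compat; auto. }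
  set (w := fun j => p j - rs * INR (nu j)).
  assert (Hw : forall j, w j = (eff nu p j - rs) * INR (nu j)).
  { intro j. unfold w, eff. field. apply Rgt_not_eq, Hnupos. }
  assert (HwL : forall y, In y L -> 0 <= w y).
  { intros y Hy. apply HinL in Hy. destruct Hy as [s [Hs <-]].
    rewrite Hw. apply Rmult_le_pos; [|left; auto].
    assert (eff nu p (e s) >= rs) by (apply Hle; lia). lra. }
  assert (HwnL : forall y, ~ In y L -> w y <= 0).
  { intros y Hy. destruct (Hsurj y) as [s [Hs <-]].
    assert (Hst : (t < s)%nat).
    { destruct (Nat.lt_ge_cases t s); auto. exfalso; apply Hy, HinL.
      exists s; split; auto; lia. }
    rewrite Hw. assert (rs >= eff nu p (e s)) by (apply Hle; lia).
    assert (0 < INR (nu (e s))) by auto. nra. }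
  assert (HfinL : finsub (prefix_set e t) L).
  { split; auto. intros j Hj; apply HinL; auto. }
  split; [split|].
  - intro j. split.
    + intro Hj. exists j. split; auto. intro h; lia.
    + intros [i [[s [Hs <-]] Hji]].
      destruct (classic (j = e s)) as [->|Hne].
      * exists s; auto.
      * assert (Hlt : ltJ j (e s)) by (split; auto).
        assert (Heff : eff nu p j > eff nu p (e s)).
        { unfold eff. apply div_gt. apply hp_range. apply hp_dec; auto.
          auto. apply le_INR, hnu_mono; auto. }
        destruct (Hsurj j) as [s' [Hs' <-]].
        exists s'. split; auto.
        destruct (Nat.le_gt_cases s' t); [lia|].
        assert (eff nu p (e s) >= eff nu p (e s')) by (apply Hle; lia). lra.
  - intros eps Heps. exists L. split; auto. lra.
  - intros I' [_ Hp'] M HM.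
    destruct (Hp' rs Hrs) as [l [Hfl Hpl]].
    assert (HnuL : (sumN nu L <= M)%nat).
    { assert (H1 : sumR w l <= sumR w L).
      { apply keyB; auto. apply Hfl. }
      unfold w in H1. rewrite !sumR_lin in H1.
      assert (H2 := HM l Hfl). apply le_INR in H2.
      fold L in Hpl.
      assert (INR (sumN nu L) < INR M + 1) by nra.
      rewrite <- S_INR in H. apply INR_lt in H. lia. }
    intros l' [Hnd' Hin'].
    assert (H1 : sumR (fun j => INR (nu j)) l' <= sumR (fun j => INR (nu j)) L).
    { apply keyB; auto. intros; left; auto. intros y Hy Hy2.
      exfalso; apply Hy2, HinL, Hin'; auto. }
    rewrite !sumR_INR in H1. apply INR_le in H1. lia.
Qed.
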